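(* Let $n\ge 1$, $M\ge1$ be integers and $a=(a_0,\dots,a_n)\in\mathbb{Z}^{n+1}$ with $0\le a_i\le M$ and $a_0=a_n=0$. Let $V=\{j+i/(2n+2): 0\le j<M,\ 0\le i\le 2n+2,\ i,j\in\mathbb{Z}\}$, $W=V^{2n+1}$, and let $G_0$ be the directed graph defined below. Then: (i) if $y=(y_j)_{j\in\mathbb{Z}}$ is a tropical recurrent minimal sequence with all $y_j\in V$ satisfying $a$, then every letter $Y_i=(y_i,\dots,y_{i+2n})$ of the sequence $Y=Y(y)=(Y_i)_{i\in\mathbb{Z}}$ is a vertex of $G_0$ and there is an arrow in $G_0$ from $Y_i$ to $Y_{i+1}$ for every $i$; thus $Y$ gives a bi-infinite path $p(Y)$ in $G_0$; (ii) conversely, for every bi-infinite path $p$ in $G_0$ there is a unique tropical recurrent minimal sequence $y$ with values in $V$ satisfying $a$ such that $p=p(Y(y))$; (iii) $y$ is periodic with period $d$ if and only if $Y(y)$ is periodic with period $d$.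
   Context: A vector $z=(z_0,\dots,z_N)\in\mathbb{R}^{N+1}$ satisfies $a$ and is minimal if for each $0\le k\le N-n$ the minimum $\min_{0\le i\le n}\{a_i+z_{i+k}\}$ is attained at least twice, and for each $n\le j\le N-n$ there exists $j-n\le k\le j$ with $a_{j-k}+z_j=\min_{0\le i\le n}\{a_i+z_{k+i}\}$. The graph $G_0$ has as vertices the elements $(z_0,\dots,z_{2n})\in W$ which (with $N=2n$) satisfy $a$ and are minimal; there is an arrow from $(z_0,\dots,z_{2n})$ to $(z'_0,\dots,z'_{2n})$ iff $z_{i+1}=z'_i$ for $0\le i\le 2n-1$ (loops allowed). A tropical recurrent sequence is $y=(y_j)_{j\in\mathbb{Z}}$ with real entries; it satisfies $a$ if for every $k\in\mathbb{Z}$ the minimum $\min_{0\le i\le n}\{a_i+y_{i+k}\}$ is attained for at least two different $i$; it is minimal if for every $j$ there is $k$ with $j-n\le k\le j$ and $a_{j-k}+y_j=\min_{0\le i\le n}\{a_i+y_{i+k}\}$. A sequence $(x_j)_{j\in\mathbb{Z}}$ (of numbers or of letters of $W$) is periodic with period $d\ge 1$ if $x_{j+d}=x_j$ for all $j$. *)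

(* Defs.v *)
From HB Require Import structures.
From mathcomp Require Import all_boot all_order all_algebra.
From mathcomp Require Import reals.
Unset Printing Implicit Defensive.
Import Order.TTheory GRing.Theory Num.Theory.
Local Open Scope ring_scope.

Section TropDefs.
Context {R : realType}.

Definition inV (n M : nat) (x : R) : Prop :=
  exists j i : nat, (j < M)%N /\ (i <= n.*2.+2)%N /\
    x = j%:R + i%:R / (n.*2.+2)%:R.

Definition tminN (a : nat -> int) (n : nat) (z : nat -> R) (k : nat) : R :=
  \big[Num.min/((a 0%N)%:~R + z k)]_(i < n.+1) ((a i)%:~R + z (i + k)%N).

Definition satisfies_fin (a : nat -> int) (n N : nat) (z : nat -> R) : Prop :=
  forall k : nat, (k <= N - n)%N ->
    exists i1 i2 : nat, [/\ i1 != i2, (i1 <= n)%N, (i2 <= n)%N,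
      (a i1)%:~R + z (i1 + k)%N = tminN a n z k &
      (a i2)%:~R + z (i2 + k)%N = tminN a n z k].

Definition minimal_fin (a : nat -> int) (n N : nat) (z : nat -> R) : Prop :=
  forall j : nat, (n <= j)%N -> (j <= N - n)%N ->
    exists k : nat, [/\ (j - n <= k)%N, (k <= j)%N &
      (a (j - k)%N)%:~R + z j = tminN a n z k].

Definition letter (n : nat) := {ffun 'I_(n.*2.+1) -> R}.

Definition lget (n : nat) (z : letter n) (i : nat) : R := z (inord i).

Definition G0_vertex (n M : nat) (a : nat -> int) (z : letter n) : Prop :=
  (forall i : 'I_(n.*2.+1), inV n M (z i)) /\
  satisfies_fin a n n.*2 (lget n z) /\ minimal_fin a n n.*2 (lget n z).

Definition G0_arrow (n : nat) (z z' : letter n) : Prop :=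
  forall i : nat, (i <= n.*2 - 1)%N -> lget n z (i.+1) = lget n z' i.

Definition G0_path (n M : nat) (a : nat -> int) (p : int -> letter n) : Prop :=
  forall i : int, G0_vertex n M a (p i) /\ G0_arrow n (p i) (p (i + 1)).

Definition tmin (a : nat -> int) (n : nat) (y : int -> R) (k : int) : R :=
  \big[Num.min/((a 0%N)%:~R + y k)]_(i < n.+1) ((a i)%:~R + y (i%:Z + k)).

Definition trop_satisfies (a : nat -> int) (n : nat) (y : int -> R) : Prop :=
  forall k : int,
    exists i1 i2 : nat, [/\ i1 != i2, (i1 <= n)%N, (i2 <= n)%N,
      (a i1)%:~R + y (i1%:Z + k) = tmin a n y k &
      (a i2)%:~R + y (i2%:Z + k) = tmin a n y k].

Definition trop_minimal (a : nat -> int) (n : nat) (y : int -> R) : Prop :=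
  forall j : int, exists k : int, [/\ j - n%:Z <= k, k <= j &
      (a `|j - k|%N)%:~R + y j = tmin a n y k].

Definition Yseq (n : nat) (y : int -> R) : int -> letter n :=
  fun i => [ffun m : 'I_(n.*2.+1) => y (i + (m : nat)%:Z)].

Definition periodic {T : Type} (x : int -> T) (d : nat) : Prop :=
  forall j : int, x (j + d%:Z) = x j.

End TropDefs.

(* Main.v *)
Require Import Defs.
From HB Require Import structures.
From mathcomp Require Import all_boot all_order all_algebra.
From mathcomp Require Import reals.
From mathcomp Require Import zify.
From Stdlib Require Import FunctionalExtensionality.
Import Order.TTheory GRing.Theory Num.Theory.
Local Open Scope ring_scope.

Section Helpers.
Variables (R : realType) (n M : nat) (a : nat -> int).

Lemma lget_Y (y : int -> R) i m : (m <= n.*2)%N ->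
  lget n (Yseq n y i) m = y (i + m%:Z).
Proof. by move=> hm; rewrite /lget /Yseq ffunE inordK // ltnS. Qed.

Lemma tminN_Y (y : int -> R) i k : (k <= n)%N ->
  tminN a n (lget n (Yseq n y i)) k = tmin a n y (i + k%:Z).
Proof.
move=> hk; rewrite /tminN /tmin (lget_Y _ _ k); last by rewrite -addnn; lia.
apply: eq_bigr => j _; rewrite lget_Y; last by have := ltn_ord j; rewrite -addnn; lia.
by rewrite PoszD addrCA.
Qed.

Lemma vertex_of (y : int -> R) : (forall j, inV n M (y j)) ->
  trop_satisfies a n y -> trop_minimal a n y ->
  forall i, G0_vertex n M a (Yseq n y i).
Proof.
move=> Hv Hs Hm i; split; first by move=> m; rewrite ffunE.
split.
- move=> k hk; have hk' : (k <= n)%N by move: hk; rewrite -addnn; lia.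
  have [i1 [i2 [h1 h2 h3 h4 h5]]] := Hs (i + k%:Z).
  exists i1, i2; split => //; rewrite tminN_Y // lget_Y; try (rewrite -addnn; lia).
  + by rewrite -h4 PoszD addrCA.
  + by rewrite -h5 PoszD addrCA.
- move=> j hj1 hj2; have hj : j = n by move: hj2; rewrite -addnn; lia.
  subst j.
  have [k [hk1 hk2 hk3]] := Hm (i + n%:Z).
  have hk0 : k = i + (`|k - i|%N)%:Z by lia.
  exists `|k - i|%N; split; first by lia.
    lia.
  rewrite tminN_Y; last by lia.
  rewrite lget_Y; last by rewrite -addnn; lia.
  rewrite -hk0 -hk3; congr (_%:~R + _); congr a; lia.
Qed.

Lemma arrow_of (y : int -> R) i : (1 <= n)%N -> G0_arrow n (Yseq n y i) (Yseq n y (i + 1)).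
Proof.
move=> hn m hm; rewrite !lget_Y; try (move: hm; rewrite -addnn; lia).
congr y; lia.
Qed.

Lemma vertex_to (y : int -> R) : (forall i, G0_vertex n M a (Yseq n y i)) ->
  (forall j, inV n M (y j)) /\ trop_satisfies a n y /\ trop_minimal a n y.
Proof.
move=> Hv; split.
  move=> j; have := (Hv j).1 (inord 0); rewrite ffunE inordK //.
  by rewrite addr0.
split.
- move=> k; have [i1 [i2 [h1 h2 h3 h4 h5]]] := (Hv k).2.1 0%N (leq0n _).
  exists i1, i2; split => //.
  + move: h4; rewrite tminN_Y // lget_Y; last by rewrite -addnn; lia.
    by rewrite addn0 addr0 (addrC k) => ->.
  + move: h5; rewrite tminN_Y // lget_Y; last by rewrite -addnn; lia.
    by rewrite addn0 addr0 (addrC k) => ->.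
- move=> j.
  have [k [hk1 hk2 hk3]] := (Hv (j - n%:Z)).2.2 n (leqnn _) ltac:(rewrite -addnn; lia).
  exists (j - n%:Z + k%:Z); split; try lia.
  move: hk3; rewrite tminN_Y // lget_Y; last by rewrite -addnn; lia.
  rewrite subrK => <-; congr (_%:~R + _); congr a; lia.
Qed.

End Helpers.


Lemma key_path (R : realType) (n M : nat) (a : nat -> int) (p : int -> @letter R n) :
  G0_path n M a p ->
  forall m, (m <= n.*2)%N -> forall j, lget n (p j) m = lget n (p (j + m%:Z)) 0.
Proof.
move=> Hp; elim=> [|m IH] hm j; first by rewrite addr0.
rewrite (Hp j).2; last by move: hm; rewrite -addnn; lia.
rewrite IH; last by lia.
by have -> : j + 1 + m%:Z = j + m.+1%:Z by lia.
Qed.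

Lemma path_Y (R : realType) (n M : nat) (a : nat -> int) (p : int -> @letter R n) :
  G0_path n M a p -> p = Yseq n (fun j => lget n (p j) 0).
Proof.
move=> Hp; apply: functional_extensionality => j; apply/ffunP => m.
rewrite ffunE -(@key_path _ _ _ _ _ Hp); last by have := ltn_ord m; lia.
by rewrite /lget inord_val.
Qed.

Lemma part2 (R : realType) (n M : nat) (a : nat -> int) (p : int -> @letter R n) :
  G0_path n M a p ->
     exists! y : int -> R,
       (forall j, inV n M (y j)) /\ trop_satisfies a n y /\
       trop_minimal a n y /\ p = Yseq n y.
Proof.
move=> Hp.
have hp := @path_Y _ _ _ _ _ Hp.
exists (fun j => lget n (p j) 0); split.
  have hv : forall i, G0_vertex n M a (Yseq n (fun j => lget n (p j) 0) i).
    by move=> i; rewrite -hp; exact: (Hp i).1.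
  have [h1 [h2 h3]] := @vertex_to _ _ _ _ _ hv.
  exact: (conj h1 (conj h2 (conj h3 hp))).
move=> y' [_ [_ [_ hp']]]; apply: functional_extensionality => j.
rewrite hp' lget_Y; last by [].
by rewrite addr0.
Qed.

Lemma part3 (R : realType) (n : nat) (y : int -> R) (d : nat) :
  periodic y d <-> periodic (Yseq n y) d.
Proof.
split.
  move=> hper j; apply/ffunP => m; rewrite !ffunE.
  by rewrite addrAC hper.
move=> hper j.
have := f_equal (fun z : @letter R n => z ord0) (hper j).
rewrite /Yseq !ffunE /=.
by rewrite !addr0.
Qed.

Theorem lemma1 (R : realType) (n M : nat) (a : nat -> int)
  (hn : (1 <= n)%N) (hM : (1 <= M)%N)
  (ha : forall i : nat, (i <= n)%N -> 0 <= a i <= M%:Z)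
  (ha0 : a 0%N = 0) (han : a n = 0) :
  (* (i) *)
  (forall y : int -> R,
     (forall j, inV n M (y j)) -> trop_satisfies a n y -> trop_minimal a n y ->
     forall i : int, G0_vertex n M a (Yseq n y i) /\
                     G0_arrow n (Yseq n y i) (Yseq n y (i + 1)))
  /\
  (* (ii) *)
  (forall p : int -> @letter R n, G0_path n M a p ->
     exists! y : int -> R,
       (forall j, inV n M (y j)) /\ trop_satisfies a n y /\
       trop_minimal a n y /\ p = Yseq n y)
  /\
  (* (iii) *)
  (forall y : int -> R,
     (forall j, inV n M (y j)) -> trop_satisfies a n y -> trop_minimal a n y ->
     forall d : nat, (1 <= d)%N ->
       (periodic y d <-> periodic (Yseq n y) d)).
Proof.
split.
  move=> y Hv Hs Hm i; split; first exact: vertex_of.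
  exact: arrow_of.
split; first by move=> p; exact: part2.
move=> y _ _ _ d _; exact: part3.
Qed.
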